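(* $\mathrm{1DPD}\not\subseteq\mathrm{1N}$.
   Context: A family of promise decision problems over a fixed alphabet $\Sigma$ is $\mathcal{L}=\{(L^{(+)}_n,L^{(-)}_n)\}_{n\in\mathbb{N}}$ with $L^{(+)}_n,L^{(-)}_n\subseteq\Sigma^*$ disjoint; a family of machines $\{M_n\}_n$ solves it if each $M_n$ accepts every $x\in L^{(+)}_n$ and rejects every $x\in L^{(-)}_n$ (no uniformity is required). A 1dpda is a one-way deterministic pushdown automaton with state set $Q$, endmarked input, stack alphabet $\Gamma$ and push size $e$ (each move replaces the top stack symbol by a string in $\Gamma^{\le e}$), with accepting and rejecting halting states; its stack-state complexity is $|Q|+|\Gamma^{\le e}|$. $\mathrm{1DPD}$ is the class of families of promise problems solvable by families of 1dpda's whose stack-state complexity is bounded by a fixed polynomial in $n$. $\mathrm{1N}$ is the class of families of promise problems solvable by families of one-way nondeterministic finite automata whose number of states is bounded by a fixed polynomial in $n$. *)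

(* Defs.v *)
From mathcomp Require Import all_boot.
Set Implicit Arguments. Unset Strict Implicit. Unset Printing Implicit Defensive.

(* Tape symbols of an endmarked input  ¢ x $  over the alphabet S. *)
Inductive tsym (S : Type) := Cent | Dollar | Sym of S.
Arguments Cent {S}. Arguments Dollar {S}.

Definition endmarked (S : Type) (x : seq S) : seq (tsym S) :=
  Cent :: map (@Sym S) x ++ [:: Dollar].

(* A move in state q with top stack symbol Z is either a lambda-move    *)
(* (no input read) or, exclusively, an input-reading move defined for   *)
(* every tape symbol; this enforces determinism.  Each move replaces    *)
(* the top stack symbol by a string w (w's head becomes the new top).   *)
Inductive dmove (Q G S : Type) :=
  | Lam of Q & seq G
  | Rd of (tsym S -> Q * seq G).

Definition move_push_ok (Q G S : Type) (e : nat) (m : dmove Q G S) : Prop :=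
  match m with
  | Lam _ w => size w <= e
  | Rd f => forall a, size (f a).2 <= e
  end.

Record dpda (S : Type) := Dpda {
  dQ : finType;
  dG : finType;
  de : nat;
  dq0 : dQ;
  dZ0 : dG;
  dacc : dQ;
  drej : dQ;
  dacc_rej : dacc != drej;
  ddelta : dQ -> dG -> dmove dQ dG S;
  dpush : forall q Z, move_push_ok de (ddelta q Z)
}.

Definition ssc (S : Type) (M : dpda S) : nat :=
  #|dQ M| + \sum_(i < (de M).+1) #|dG M| ^ i.

Definition dconfig (S : Type) (M : dpda S) : Type :=
  (dQ M * seq (tsym S) * seq (dG M))%type.

(* one computation step; None = no further move (halted or stuck) *)
Definition dstep (S : Type) (M : dpda S) (c : dconfig M) : option (dconfig M) :=
  let: (q, inp, stk) := c in
  if (q == dacc M) || (q == drej M) then None else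
  match stk with
  | [::] => None
  | Z :: rest =>
      match ddelta q Z with
      | Lam q' w => Some (q', inp, w ++ rest)
      | Rd f =>
          match inp with
          | [::] => None
          | a :: inp' => let: (q', w) := f a in Some (q', inp', w ++ rest)
          end
      end
  end.

Definition dinit (S : Type) (M : dpda S) (x : seq S) : dconfig M :=
  (dq0 M, endmarked x, [:: dZ0 M]).

Definition drun (S : Type) (M : dpda S) (x : seq S) (k : nat) : option (dconfig M) :=
  iter k (fun oc => obind (@dstep S M) oc) (Some (dinit M x)).

Definition dpda_accepts (S : Type) (M : dpda S) (x : seq S) : Prop :=
  exists k inp stk, drun M x k = Some (dacc M, inp, stk).

Definition dpda_rejects (S : Type) (M : dpda S) (x : seq S) : Prop :=
  exists k inp stk, drun M x k = Some (drej M, inp, stk).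

Record nfa (S : Type) := Nfa {
  nQ : finType;
  nq0 : nQ;
  ndelta : nQ -> tsym S -> {set nQ};
  nfin : {set nQ}
}.

Definition nfa_reach (S : Type) (N : nfa S) (w : seq (tsym S)) : {set nQ N} :=
  foldl (fun (A : {set nQ N}) a => \bigcup_(q in A) ndelta q a) [set nq0 N] w.

Definition nfa_accepts (S : Type) (N : nfa S) (x : seq S) : Prop :=
  [exists q in nfa_reach N (endmarked x), q \in nfin N].

Definition nfa_rejects (S : Type) (N : nfa S) (x : seq S) : Prop :=
  ~ nfa_accepts N x.

Definition promise_family (S : Type) (Lp Lm : nat -> seq S -> Prop) : Prop :=
  forall n x, Lp n x -> Lm n x -> False.

Definition in_1DPD (S : Type) (Lp Lm : nat -> seq S -> Prop) : Prop :=
  exists (M : nat -> dpda S) (c k : nat),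
    (forall n, ssc (M n) <= c * n ^ k + c) /\
    (forall n x, Lp n x -> dpda_accepts (M n) x) /\
    (forall n x, Lm n x -> dpda_rejects (M n) x).

Definition in_1N (S : Type) (Lp Lm : nat -> seq S -> Prop) : Prop :=
  exists (N : nat -> nfa S) (c k : nat),
    (forall n, #|nQ (N n)| <= c * n ^ k + c) /\
    (forall n x, Lp n x -> nfa_accepts (N n) x) /\
    (forall n x, Lm n x -> nfa_rejects (N n) x).

(* Main.v *)
Require Import Defs.
From mathcomp Require Import all_boot zify.
Set Implicit Arguments. Unset Strict Implicit. Unset Printing Implicit Defensive.

Definition Lp0 (n : nat) (x : seq bool) : Prop :=
  exists m, x = nseq m false ++ nseq m true.
Definition Lm0 (n : nat) (x : seq bool) : Prop :=
  exists i j, i != j /\ x = nseq i false ++ nseq j true.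

Lemma promise0 : promise_family Lp0 Lm0.
Proof.
move=> n x [m ->] [i [j [ij E]]].
have E1 := congr1 (count (pred1 false)) E.
have E2 := congr1 (count (pred1 true)) E.
rewrite !count_cat !count_nseq /= in E1 E2.
have Hi : i = m by lia.
have Hj : j = m by lia.
by rewrite Hi Hj eqxx in ij.
Qed.

Definition wk : 'I_3 := @Ordinal 3 0 isT.
Definition ac : 'I_3 := @Ordinal 3 1 isT.
Definition rj : 'I_3 := @Ordinal 3 2 isT.

Definition fS (Z : bool) (a : tsym bool) : 'I_3 * seq bool :=
  match a with
  | Cent => (wk, [:: Z])
  | Dollar => if Z then (rj, [:: Z]) else (ac, [:: Z])
  | Sym b => if b then (if Z then (wk, [::]) else (rj, [:: Z]))
             else (wk, [:: true; Z])
  end.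

Definition del (q : 'I_3) (Z : bool) : dmove 'I_3 bool bool := Rd (fS Z).

Lemma del_ok q Z : move_push_ok 2 (del q Z).
Proof. by move=> [|| [|]] /=; case: Z. Qed.

Lemma ac_rj : ac != rj. Proof. by []. Qed.

Definition M0 : dpda bool := @Dpda bool 'I_3 bool 2 wk false ac rj ac_rj del del_ok.

Definition runo (k : nat) (oc : option (dconfig M0)) :=
  iter k (fun oc => obind (@dstep bool M0) oc) oc.

Lemma nseq_cons_end (T : Type) i (x : T) l : nseq i x ++ x :: l = x :: nseq i x ++ l.
Proof. by elim: i => //= i ->. Qed.

Lemma push_lem i r Z stk :
  runo i (Some (wk, map (@Sym bool) (nseq i false) ++ r, Z :: stk) : option (dconfig M0))
  = Some (wk, r, nseq i true ++ Z :: stk).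
Proof.
elim: i Z stk => [//|i IH] Z stk.
rewrite /runo iterSr /=.
have := IH true (Z :: stk); rewrite /runo => ->.
by rewrite nseq_cons_end.
Qed.

Lemma pop_lem k r stk :
  runo k (Some (wk, map (@Sym bool) (nseq k true) ++ r, nseq k true ++ stk) : option (dconfig M0))
  = Some (wk, r, stk).
Proof.
elim: k => [//|k IH].
rewrite /runo iterSr /=.
exact: IH.
Qed.

Lemma runoD a b oc : runo (a + b) oc = runo a (runo b oc).
Proof. exact: iterD. Qed.

Lemma drun_runo x k : drun M0 x k = runo k (Some (dinit M0 x)).
Proof. by []. Qed.

Lemma endm i j : endmarked (nseq i false ++ nseq j true) =
  Cent :: map (@Sym bool) (nseq i false) ++ map (@Sym bool) (nseq j true) ++ [:: Dollar].
Proof. by rewrite /endmarked map_cat catA. Qed.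

Lemma start i j : runo i.+1 (Some (dinit M0 (nseq i false ++ nseq j true))) =
  Some (wk, map (@Sym bool) (nseq j true) ++ [:: Dollar], nseq i true ++ [:: false]).
Proof.
rewrite -addn1 runoD /dinit endm /runo /=.
exact: push_lem.
Qed.

Lemma in1DPD0 : in_1DPD Lp0 Lm0.
Proof.
exists (fun _ => M0), 100, 0; split; [|split].
- by move=> n; rewrite /ssc /= card_ord !big_ord_recr big_ord0 /= card_bool.
- move=> n x [m ->].
  exists (1 + (m + m.+1)), [::], [:: false].
  rewrite drun_runo !runoD start.
  have := pop_lem m [:: Dollar] [:: false]; rewrite /runo => ->.
  by [].
- move=> n x [i [j [ij ->]]].
  case: (ltngtP i j) => [lt|gt|eq]; last by rewrite eq eqxx in ij.
  + have [d ->] : exists d, j = i + d.+1 by exists (j - i).-1; lia.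
    exists (1 + (i + i.+1)), (map (@Sym bool) (nseq d true) ++ [:: Dollar]), [:: false].
    rewrite drun_runo !runoD start nseqD map_cat -catA.
    have := pop_lem i (map (@Sym bool) (nseq d.+1 true) ++ [:: Dollar]) [:: false].
    by rewrite /runo => ->.
  + have [d ->] : exists d, i = j + d.+1 by exists (i - j).-1; lia.
    exists (1 + (j + (j + d.+1).+1)), [::], (nseq d.+1 true ++ [:: false]).
    rewrite drun_runo !runoD start nseqD -catA.
    have := pop_lem j [:: Dollar] (nseq d.+1 true ++ [:: false]).
    by rewrite /runo => ->.
Qed.

Section NFA.
Variable N : nfa bool.
Definition R (A : {set nQ N}) (w : seq (tsym bool)) : {set nQ N} :=
  foldl (fun (A : {set nQ N}) a => \bigcup_(q in A) ndelta q a) A w.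

Lemma R_mono w : forall A B : {set nQ N}, A \subset B -> R A w \subset R B w.
Proof.
elim: w => [//|a w IH] A B AB /=.
apply: IH; apply/subsetP => x /bigcupP [q qA xq].
apply/bigcupP; exists q => //; exact: (subsetP AB).
Qed.

Lemma R_split w : forall (A : {set nQ N}) x, x \in R A w -> exists2 p, p \in A & x \in R [set p] w.
Proof.
elim: w => [|a w IH] A x /=; first by move=> xA; exists x => //; rewrite inE.
move=> /IH [p' /bigcupP [q qA p'q] xp'].
exists q => //.
apply: (subsetP (@R_mono w [set p'] (\bigcup_(q0 in [set q]) ndelta q0 a) _)) xp'.
by rewrite sub1set; apply/bigcupP; exists q => //; rewrite inE.
Qed.

Definition uu m := Cent :: map (@Sym bool) (nseq m false).
Definition vv m := map (@Sym bool) (nseq m true) ++ [:: Dollar].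

Lemma endm2 i j : endmarked (nseq i false ++ nseq j true) = uu i ++ vv j.
Proof. by rewrite /endmarked map_cat -catA. Qed.

Lemma nfa_lb : (forall m, nfa_accepts N (nseq m false ++ nseq m true)) ->
  (forall i j, i != j -> nfa_rejects N (nseq i false ++ nseq j true)) -> False.
Proof.
move=> Hacc Hrej.
pose P m p := (p \in R [set nq0 N] (uu m)) && [exists q in R [set p] (vv m), q \in nfin N].
have HP m : exists p, P m p.
  have := Hacc m; rewrite /nfa_accepts endm2 => /exists_inP [q].
  rewrite /nfa_reach foldl_cat -/(R _ (uu m)) -/(R _ (vv m)).
  move=> /R_split [p pin qin] qf.
  by exists p; rewrite /P pin; apply/exists_inP; exists q.
pose f (m : 'I_(#|nQ N|).+1) := odflt (nq0 N) [pick p | P m p].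
have Pf (m : 'I_(#|nQ N|).+1) : P m (f m).
  rewrite /f; case: pickP => [p //|none].
  by have [p] := HP m; rewrite none.
have finj : injective f.
  move=> i j eqf; apply/val_inj/eqP; apply/negPn/negP => ij.
  apply: (Hrej _ _ ij).
  have := Pf i; have := Pf j; rewrite -eqf => /andP [_ /exists_inP [q qin qf]] /andP [pin _].
  rewrite /nfa_accepts endm2; apply/exists_inP; exists q => //.
  rewrite /nfa_reach foldl_cat -/(R _ (uu i)) -/(R _ (vv j)).
  apply: (subsetP (R_mono _ _)) qin; by rewrite sub1set.
by have := @leq_card _ _ f finj; rewrite card_ord ltnn.
Qed.
End NFA.

Theorem proposition5p1 :
  exists (S : finType) (Lp Lm : nat -> seq S -> Prop),
    promise_family Lp Lm /\ in_1DPD Lp Lm /\ ~ in_1N Lp Lm.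
Proof.
exists bool, Lp0, Lm0; split; [exact: promise0|split; first exact: in1DPD0].
move=> [N [c [k [_ [Ha Hr]]]]].
apply: (@nfa_lb (N 0)).
- by move=> m; apply: Ha; exists m.
- by move=> i j ij; apply: Hr; exists i, j.
Qed.
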